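(* Let $(Y,\le)$ be a dcpo and let $X\subset Y$ be a dense lower subset of $Y$ which truncates $Y$. Then $Y$, together with the inclusion $X\hookrightarrow Y$, is the directed completion of $X$ (with the induced order). If moreover every two elements of $X$ have a supremum in $X$, the conclusion still holds under the weaker assumption that $X$ directly truncates $Y$.
   Context: Let $(Y,\le)$ be a partially ordered set. A subset $D\subset Y$ is directed if every finite subset of $D$ (including the empty one) has an upper bound in $D$. $A\subset Y$ is a lower set if $x\in A$ and $y\le x$ imply $y\in A$; $\downarrow A:=\{x:x\le a\text{ for some }a\in A\}$, $\downarrow a:=\downarrow\{a\}$. $(Y,\le)$ is a dcpo if every directed subset has a supremum. A subset $A$ is directed-sup-closed if the supremum of every directed $D\subset A$ which has a supremum belongs to $A$. $\overline A$ is the smallest directed-sup-closed set containing $A$, $\widehat A$ the smallest set containing $A$ that is both a lower set and directed-sup-closed; $A$ is dense if $\overline A=Y$; $A$ has a tip if $\overline A$ has a maximum, denoted ${\sf tip}\,A$. An element $a\in Y$ truncates $Y$ if for every $B\subset Y$ having a tip with $a\le{\sf tip}\,B$ we have $a\in\widehat{(\downarrow B)\cap(\downarrow a)}$; it directly truncates $Y$ if this holds for every directed $B\subset Y$ having a supremum with $a\le\sup B$. A subset $X\subset Y$ (directly) truncates $Y$ if every $a\in X$ does. A map between partially ordered sets has the Monotone Convergence Property (Mcp) if it maps every directed set having a supremum to a set having a supremum, with $T(\sup D)=\sup T(D)$. A directed completion of $(X,\le)$ is a dcpo $(\overline X,\bar\le)$ with a map $\iota:X\to\overline X$ with the Mcp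 such that for every dcpo $Z$ and every map $T:X\to Z$ with the Mcp there is a unique map $\bar T:\overline X\to Z$ with the Mcp satisfying $\bar T\circ\iota=T$. *)

(* Defs.v *)
From Stdlib Require Import List.

Section Order.
Context {Y : Type} (le : Y -> Y -> Prop).

Definition is_poset : Prop :=
  (forall x, le x x) /\
  (forall x y, le x y -> le y x -> x = y) /\
  (forall x y z, le x y -> le y z -> le x z).

Definition upper_bound (A : Y -> Prop) (u : Y) : Prop :=
  forall a, A a -> le a u.

Definition is_sup (A : Y -> Prop) (s : Y) : Prop :=
  upper_bound A s /\ forall u, upper_bound A u -> le s u.

(* every finite subset (given by a list, possibly empty) has an upper bound in D *)
Definition directed (D : Y -> Prop) : Prop :=
  forall l : list Y, (forall x, In x l -> D x) ->
    exists u, D u /\ forall x, In x l -> le x u.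

Definition dcpo : Prop :=
  forall D, directed D -> exists s, is_sup D s.

Definition lower_set (A : Y -> Prop) : Prop :=
  forall x y, A x -> le y x -> A y.

Definition down (A : Y -> Prop) : Y -> Prop :=
  fun x => exists a, A a /\ le x a.

Definition dsup_closed (A : Y -> Prop) : Prop :=
  forall D, (forall x, D x -> A x) -> directed D ->
    forall s, is_sup D s -> A s.

Definition dclosure (A : Y -> Prop) : Y -> Prop :=
  fun y => forall C, dsup_closed C -> (forall x, A x -> C x) -> C y.

Definition dhat (A : Y -> Prop) : Y -> Prop :=
  fun y => forall C, lower_set C -> dsup_closed C ->
    (forall x, A x -> C x) -> C y.

Definition dense (A : Y -> Prop) : Prop := forall y, dclosure A y.

Definition is_tip (A : Y -> Prop) (t : Y) : Prop :=
  dclosure A t /\ forall y, dclosure A y -> le y t.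

Definition truncates (a : Y) : Prop :=
  forall (B : Y -> Prop) t, is_tip B t -> le a t ->
    dhat (fun x => down B x /\ le x a) a.

Definition directly_truncates (a : Y) : Prop :=
  forall (B : Y -> Prop) s, directed B -> is_sup B s -> le a s ->
    dhat (fun x => down B x /\ le x a) a.

Definition truncates_set (X : Y -> Prop) : Prop :=
  forall a, X a -> truncates a.

Definition directly_truncates_set (X : Y -> Prop) : Prop :=
  forall a, X a -> directly_truncates a.

End Order.

Definition image {A B : Type} (T : A -> B) (D : A -> Prop) : B -> Prop :=
  fun b => exists a, D a /\ T a = b.

Definition Mcp {A B : Type} (leA : A -> A -> Prop) (leB : B -> B -> Prop)
  (T : A -> B) : Prop :=
  forall D, directed leA D -> forall s, is_sup leA D s ->
    is_sup leB (image T D) (T s).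

Definition directed_completion {X Xb : Type} (leX : X -> X -> Prop)
  (leb : Xb -> Xb -> Prop) (iota : X -> Xb) : Prop :=
  is_poset leb /\ dcpo leb /\ Mcp leX leb iota /\
  forall (Z : Type) (leZ : Z -> Z -> Prop), is_poset leZ -> dcpo leZ ->
    forall T : X -> Z, Mcp leX leZ T ->
      exists Tb : Xb -> Z, Mcp leb leZ Tb /\ (forall x, Tb (iota x) = T x) /\
        forall S : Xb -> Z, Mcp leb leZ S -> (forall x, S (iota x) = T x) ->
          forall y, S y = Tb y.

Definition induced {Y : Type} (le : Y -> Y -> Prop) (X : Y -> Prop) :
  {x | X x} -> {x | X x} -> Prop :=
  fun x y => le (proj1_sig x) (proj1_sig y).

(* Main.v *)
Require Import Defs.
From Stdlib Require Import List ClassicalEpsilon ProofIrrelevance.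

Lemma lift_list {A B} (f : A -> B) (D : A -> Prop) (l : list B) :
  (forall x, In x l -> image f D x) ->
  exists l', (forall a, In a l' -> D a) /\ map f l' = l.
Proof.
  induction l as [|b l IH]; intros H.
  - exists nil; split; [intros a []|reflexivity].
  - destruct (H b (or_introl eq_refl)) as [a [Da Ea]].
    destruct IH as [l' [H1 H2]]. { intros x Hx; apply H; right; exact Hx. }
    exists (a :: l'); split.
    + intros a' [<-|Ha']; auto.
    + simpl; rewrite Ea, H2; reflexivity.
Qed.

Lemma directed_image {A B} (leA : A -> A -> Prop) (leB : B -> B -> Prop) (f : A -> B) D :
  (forall x y, D x -> D y -> leA x y -> leB (f x) (f y)) ->
  directed leA D -> directed leB (image f D).
Proof.
  intros Hm HD l Hl.
  destruct (lift_list f D l Hl) as [l' [H1 H2]].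
  destruct (HD l' H1) as [u [Du Hu]].
  exists (f u); split; [exists u; auto|].
  intros x Hx. rewrite <- H2 in Hx. apply in_map_iff in Hx.
  destruct Hx as [a [<- Ha]]. apply Hm; auto.
Qed.

Lemma directed_sub {Y} (le : Y -> Y -> Prop) (X : Y -> Prop) (D : Y -> Prop) :
  (forall d, D d -> X d) -> directed le D ->
  directed (induced le X) (fun a => D (proj1_sig a)).
Proof.
  intros HX HD l Hl.
  destruct (HD (map (@proj1_sig Y X) l)) as [u [Du Hu]].
  { intros x Hx. apply in_map_iff in Hx. destruct Hx as [a [<- Ha]]. auto. }
  exists (exist _ u (HX u Du)); split; [exact Du|].
  intros x Hx. unfold induced; simpl. apply Hu. apply in_map; exact Hx.
Qed.

Lemma sup_sub {Y} (le : Y -> Y -> Prop) (X : Y -> Prop) (D : Y -> Prop) s (Xs : X s) :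
  (forall d, D d -> X d) -> is_sup le D s ->
  is_sup (induced le X) (fun a => D (proj1_sig a)) (exist _ s Xs).
Proof.
  intros HX [Hub Hl]; split.
  - intros a Ha. unfold induced; simpl. apply Hub; exact Ha.
  - intros u Hu. unfold induced; simpl. apply Hl. intros a Da.
    apply (Hu (exist _ a (HX a Da))). exact Da.
Qed.

Lemma Mcp_mono {A B} (leA : A->A->Prop) (leB : B -> B -> Prop) (T : A -> B) :
  is_poset leA -> Mcp leA leB T ->
  forall x y, leA x y -> leB (T x) (T y).
Proof.
  intros [Hr [Has Htr]] HT x y Hxy.
  set (P := fun z => z = x \/ z = y).
  assert (HD : directed leA P).
  { intros l Hl. exists y; split; [right; reflexivity|].
    intros z Hz. destruct (Hl z Hz) as [->| ->]; auto. }
  assert (Hs : is_sup leA P y).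
  { split. - intros z [->| ->]; auto. - intros u Hu. apply Hu. right; reflexivity. }
  destruct (HT P HD y Hs) as [Hub _]. apply Hub. exists x; split; [left|]; reflexivity.
Qed.

Lemma sup_unique {A} (le : A -> A -> Prop) (P : A -> Prop) s s' :
  is_poset le -> is_sup le P s -> is_sup le P s' -> s = s'.
Proof.
  intros [Hr [Has Htr]] [H1 H2] [H3 H4]. apply Has; auto.
Qed.

Lemma sup_ext {A} (le : A -> A -> Prop) (P P' : A -> Prop) s :
  (forall z, P z <-> P' z) -> is_sup le P s -> is_sup le P' s.
Proof.
  intros He [H1 H2]; split.
  - intros a Ha. apply H1, He, Ha.
  - intros u Hu. apply H2. intros a Ha. apply Hu, He, Ha.
Qed.


Lemma tip_of_sup {Y} (le : Y -> Y -> Prop) (D : Y -> Prop) s :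
  directed le D -> is_sup le D s -> is_tip le D s.
Proof.
  intros HD Hs. split.
  - intros C HC HDC. exact (HC D HDC HD s Hs).
  - intros y Hy. apply (Hy (fun y => le y s)).
    + intros D' HD' _ s' [_ Hl]. apply Hl. intros a Ha. apply HD', Ha.
    + intros x Dx. destruct Hs as [Hub _]. apply Hub, Dx.
Qed.

Section Core.
Context (Y : Type) (le : Y -> Y -> Prop) (X : Y -> Prop)
  (Hpo : is_poset le) (Hd : dcpo le) (Hdense : dense le X) (Hlow : lower_set le X)
  (Htr : directly_truncates_set le X)
  (Z : Type) (leZ : Z -> Z -> Prop) (HpoZ : is_poset leZ) (HdZ : dcpo leZ)
  (T : {z | X z} -> Z) (HT : Mcp (induced le X) leZ T).

Definition Tdown (y : Y) : Z -> Prop :=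
  image T (fun a : {z | X z} => le (proj1_sig a) y).

Lemma Tmono : forall a b, le (proj1_sig a) (proj1_sig b) -> leZ (T a) (T b).
Proof.
  intros a b H. apply (Mcp_mono (induced le X) leZ T); auto.
  destruct Hpo as [Hr [Has Htr']]. split; [|split].
  - intros x; apply Hr.
  - intros [x hx] [y hy] H1 H2. unfold induced in *; simpl in *.
    assert (x = y) by auto. subst y. f_equal. apply proof_irrelevance.
  - intros x y z; unfold induced; eauto.
Qed.

Lemma sup_at_X : forall x : {z | X z}, is_sup leZ (Tdown (proj1_sig x)) (T x).
Proof.
  intros x. split.
  - intros w [a [Ha <-]]. apply Tmono, Ha.
  - intros u Hu. apply Hu. exists x; split; [apply Hpo|reflexivity].
Qed.

Lemma Tdown_mono y y' zy zy' : le y y' -> is_sup leZ (Tdown y) zy ->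
  is_sup leZ (Tdown y') zy' -> leZ zy zy'.
Proof.
  intros Hyy [H1 H2] [H3 H4]. apply H2. intros w [a [Ha <-]].
  apply H3. exists a; split; [|reflexivity].
  destruct Hpo as [_ [_ Ht]]. eauto.
Qed.

Lemma step D s (sigma : Y -> Z) : directed le D -> is_sup le D s ->
  (forall d, D d -> is_sup leZ (Tdown d) (sigma d)) ->
  forall z, is_sup leZ (image sigma D) z -> is_sup leZ (Tdown s) z.
Proof.
  intros HD Hs Hsig z Hz.
  destruct Hpo as [Hr [Has Ht]].
  destruct HpoZ as [HrZ [HasZ HtZ]].
  split.
  - intros w [[x Xx] [Ha <-]]. simpl in Ha.
    pose proof (Htr x Xx D s HD Hs Ha) as Hhat.
    set (K := fun w => le w x /\ forall h : X w, leZ (T (exist _ w h)) z).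
    assert (HK : K x).
    { apply Hhat.
      - intros w1 w2 [Hw1 Hw1'] H21. split; [eauto|].
        intros h. pose (hw := Hlow x w1 Xx Hw1).
        apply HtZ with (T (exist _ w1 hw)); [|apply Hw1'].
        apply Tmono. exact H21.
      - intros D' HD'K HD' s' Hs'. assert (Hsx : le s' x).
        { destruct Hs' as [_ Hl]. apply Hl. intros a Ha'. apply HD'K, Ha'. }
        split; [exact Hsx|]. intros h.
        assert (HX' : forall d, D' d -> X d).
        { intros d Hd'. apply (Hlow x d Xx). apply HD'K, Hd'. }
        pose proof (HT _ (directed_sub le X D' HX' HD') _ (sup_sub le X D' s' h HX' Hs'))
          as [_ Hl].
        apply Hl. intros w [[a ha] [Ha' <-]]. simpl in Ha'.
        apply (proj2 (HD'K a Ha')).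
      - intros w [[d [Dd Hwd]] Hwx]. split; [exact Hwx|]. intros h.
        apply HtZ with (sigma d).
        + apply (proj1 (Hsig d Dd)). exists (exist _ w h); split; [exact Hwd|reflexivity].
        + apply (proj1 Hz). exists d; split; [exact Dd|reflexivity]. }
    apply (proj2 HK Xx).
  - intros u Hu. apply (proj2 Hz). intros w [d [Dd <-]].
    apply (proj2 (Hsig d Dd)). intros w [a [Ha <-]]. apply Hu.
    exists a; split; [|reflexivity]. apply Ht with d; [exact Ha|].
    apply (proj1 Hs), Dd.
Qed.

Lemma exists_sup : forall y, exists z, is_sup leZ (Tdown y) z.
Proof.
  intros y. apply (Hdense y (fun y => exists z, is_sup leZ (Tdown y) z)).
  - intros D HDC HD s Hs.
    destruct (HD nil) as [d0 [Dd0 _]]. { intros x []. }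
    destruct (HDC d0 Dd0) as [z0 _].
    set (sigma := fun y => epsilon (inhabits z0) (fun z => is_sup leZ (Tdown y) z)).
    assert (Hsig : forall d, D d -> is_sup leZ (Tdown d) (sigma d)).
    { intros d Dd. apply epsilon_spec. apply HDC, Dd. }
    assert (HDi : directed leZ (image sigma D)).
    { apply directed_image with le; [|exact HD].
      intros a b Da Db Hab. apply (Tdown_mono a b); auto. }
    destruct (HdZ _ HDi) as [z Hz]. exists z.
    apply (step D s sigma); auto.
  - intros x Xx. exists (T (exist _ x Xx)). apply (sup_at_X (exist _ x Xx)).
Qed.

Definition Tb (y : Y) : Z := proj1_sig (constructive_indefinite_description _ (exists_sup y)).

Lemma Tb_spec y : is_sup leZ (Tdown y) (Tb y).
Proof. unfold Tb. destruct (constructive_indefinite_description _ _); assumption. Qed.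

Lemma Tb_Mcp : Mcp le leZ Tb.
Proof.
  intros D HD s Hs.
  assert (HDi : directed leZ (image Tb D)).
  { apply directed_image with le; [|exact HD].
    intros a b Da Db Hab. apply (Tdown_mono a b); auto using Tb_spec. }
  destruct (HdZ _ HDi) as [z Hz].
  assert (E : z = Tb s).
  { apply (sup_unique leZ (Tdown s)); auto using Tb_spec.
    apply (step D s Tb); auto using Tb_spec. }
  subst z; exact Hz.
Qed.

Lemma Tb_ext x : Tb (proj1_sig x) = T x.
Proof. apply (sup_unique leZ (Tdown (proj1_sig x))); auto using Tb_spec, sup_at_X. Qed.

Lemma Tb_unique : forall S : Y -> Z, Mcp le leZ S -> (forall x, S (proj1_sig x) = T x) ->
  forall y, S y = Tb y.
Proof.
  intros S HS HSx y. apply (Hdense y (fun y => S y = Tb y)).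
  - intros D HDC HD s Hs.
    apply (sup_unique leZ (image Tb D)); [exact HpoZ| |apply Tb_Mcp; auto].
    apply sup_ext with (image S D); [|apply HS; auto].
    intros z; split; intros [d [Dd <-]]; exists d; split; auto; rewrite (HDC d Dd); reflexivity.
  - intros x Xx. pose proof (HSx (exist _ x Xx)) as E1. pose proof (Tb_ext (exist _ x Xx)) as E2. simpl in E1, E2. rewrite E1, E2. reflexivity.
Qed.

End Core.

Lemma incl_Mcp (Y : Type) (le : Y -> Y -> Prop) (X : Y -> Prop) :
  is_poset le -> dcpo le -> lower_set le X ->
  Mcp (induced le X) le (@proj1_sig Y X).
Proof.
  intros Hpo Hd Hlow D HD s Hs.
  assert (HDi : directed le (image (@proj1_sig Y X) D)).
  { apply directed_image with (induced le X); [|exact HD]. intros; assumption. }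
  destruct (Hd _ HDi) as [s' Hs'].
  assert (H1 : le s' (proj1_sig s)).
  { apply (proj2 Hs'). intros w [a [Ha <-]]. apply (proj1 Hs a Ha). }
  pose (hs' := Hlow _ _ (proj2_sig s) H1).
  assert (H2 : le (proj1_sig s) s').
  { apply (proj2 Hs (exist _ s' hs')). intros a Ha. unfold induced; simpl.
    apply (proj1 Hs'). exists a; split; auto. }
  assert (E : s' = proj1_sig s) by (apply Hpo; auto).
  subst s'; exact Hs'.
Qed.

Lemma core (Y : Type) (le : Y -> Y -> Prop) (X : Y -> Prop) :
  is_poset le -> dcpo le -> dense le X -> lower_set le X ->
  directly_truncates_set le X ->
  directed_completion (induced le X) le (@proj1_sig Y X).
Proof.
  intros Hpo Hd Hdense Hlow Htr.
  split; [exact Hpo|]. split; [exact Hd|]. split; [apply incl_Mcp; auto|].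
  intros Z leZ HpoZ HdZ T HT.
  exists (Tb Y le X Hpo Hdense Hlow Htr Z leZ HpoZ HdZ T HT).
  split; [apply Tb_Mcp|]. split; [apply Tb_ext|].
  apply Tb_unique.
Qed.

Theorem mainTheorem6 (Y : Type) (le : Y -> Y -> Prop) (X : Y -> Prop) :
  is_poset le -> dcpo le -> dense le X -> lower_set le X ->
  (truncates_set le X ->
     directed_completion (induced le X) le (@proj1_sig Y X)) /\
  ((forall x y : {z | X z}, exists s : {z | X z},
       is_sup (induced le X) (fun z => z = x \/ z = y) s) ->
   directly_truncates_set le X ->
     directed_completion (induced le X) le (@proj1_sig Y X)).
Proof.
  intros Hpo Hd Hdense Hlow. split.
  - intros Htr. apply core; auto.
    intros a Xa B s HB Hs Has. apply (Htr a Xa B s); auto. apply tip_of_sup; auto.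
  - intros _ Htr. apply core; auto.
Qed.
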